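(* Let $d\ge1$, $M := e_1e_2^\top + e_2e_1^\top$, $q_{\mathrm{pop}}(w) := w^\top Mw$, $u_\pm := (e_1\pm e_2)/\sqrt2$ and $P_{12} := u_+u_+^\top+u_-u_-^\top$. Let $w_0$ and $w_{T_\star}$ be unit vectors in $\mathbb{R}^d$ such that \[ |q_{\mathrm{pop}}(w_0)|\ge\frac{3}{4d},\qquad \|P_{12}w_0\|_2\le\frac1{\sqrt d},\qquad \|w_{T_\star} - w_0\|_2\le\frac{1}{4\sqrt d}. \] Then $\mathrm{sign}(q_{\mathrm{pop}}(w_{T_\star})) = \mathrm{sign}(q_{\mathrm{pop}}(w_0))$. Moreover, if $s := \mathrm{sign}(q_{\mathrm{pop}}(w_0))$ and $u_s := (e_1 + s e_2)/\sqrt2$, then \[ |\langle w_{T_\star},u_s\rangle| \ge \Big(\frac{\sqrt3}{2}-\frac14\Big)\frac{1}{\sqrt d} \ge \frac{1}{2\sqrt d}. \]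
   Context: In the paper, $w_0$ is the initial inner weight and $w_{T_\star}$ the inner weight at the end of Phase 1; only the stated deterministic conditions are used. *)

(* Defs.v *)
From HB Require Import structures.
From mathcomp Require Import all_boot all_order all_algebra.
Set Implicit Arguments. Unset Strict Implicit. Unset Printing Implicit Defensive.
Import Order.TTheory GRing.Theory Num.Theory.
Local Open Scope ring_scope.

Section Defs.
Variables (R : rcfType) (d : nat).

(* standard basis vector e_{k+1} of R^d (0-based nat index k); it is the zero
   vector if k >= d (only relevant for d = 1, where e_2 does not exist). *)
Definition evec (k : nat) : 'cV[R]_d := \col_(i < d) (((i : nat) == k)%:R).

Definition e1 : 'cV[R]_d := evec 0.
Definition e2 : 'cV[R]_d := evec 1.

Definition Mpop : 'M[R]_d := e1 *m e2^T + e2 *m e1^T.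

Definition qpop (w : 'cV[R]_d) : R := (w^T *m Mpop *m w) 0 0.

Definition inner (v w : 'cV[R]_d) : R := (v^T *m w) 0 0.

Definition norm2 (w : 'cV[R]_d) : R := Num.sqrt (\sum_(i < d) w i 0 ^+ 2).

Definition uplus : 'cV[R]_d := (Num.sqrt 2)^-1 *: (e1 + e2).
Definition uminus : 'cV[R]_d := (Num.sqrt 2)^-1 *: (e1 - e2).

Definition P12 : 'M[R]_d := uplus *m uplus^T + uminus *m uminus^T.

Definition u_sgn (s : R) : 'cV[R]_d := (Num.sqrt 2)^-1 *: (e1 + s *: e2).

End Defs.

(* Main.v *)
Require Import Defs.
From HB Require Import structures.
From mathcomp Require Import all_boot all_order all_algebra.
From mathcomp Require Import ring lra.
Import Order.TTheory GRing.Theory Num.Theory.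
Local Open Scope ring_scope.

Lemma sqle {R : rcfType} (u v : R) : 0 <= v -> u^+2 <= v^+2 -> u <= v.
Proof. move=> h1 h2; nra. Qed.

Lemma nK {R : rcfType} (u : R) : `|u| ^+ 2 = u ^+ 2.
Proof. exact: real_normK (num_real u). Qed.

Lemma core1 (R : rcfType) (a b x y t s3 : R) : 0 < t -> t^+2 = 2 -> 0 < s3 -> s3^+2 = 3 ->
  3/4 <= 2*a*b -> a^+2+b^+2 <= 1 -> x^+2+y^+2 <= 1/16 ->
  0 < (a+x)*(b+y) /\ t*(s3/2 - 1/4) <= `|a+x+(b+y)|.
Proof.
move=> t0 t2 s0 s2 hab hn hd.
have S2 := nK (a+b). have D2 := nK (a-b). have P2 := nK (x+y). have Q2 := nK (x-y).
have S0 := normr_ge0 (a+b). have D0 := normr_ge0 (a-b).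
have P0 := normr_ge0 (x+y). have Q0 := normr_ge0 (x-y).
have hPQ : `|x+y| + `|x-y| <= 1/2 by apply: sqle; nra.
have hSD : `|a+b| + `|a-b| <= 2 by apply: sqle; nra.
have hSD' : 3/4 <= `|a+b| - `|a-b|.
  have : (`|a+b| - `|a-b|) * (`|a+b| + `|a-b|) >= 3/2 by nra.
  nra.
have T1 : `|a+b| - `|x+y| <= `|a+x+(b+y)|.
  have := lerB_normD (a+b) (x+y). have -> : a+b+(x+y) = a+x+(b+y) by ring. by [].
have T2 : `|a+x-(b+y)| <= `|a-b| + `|x-y|.
  have := ler_normD (a-b) (x-y). have -> : a-b+(x-y) = a+x-(b+y) by ring. by [].
have Z0 := normr_ge0 (a+x+(b+y)). have Z2 := nK (a+x+(b+y)).
have W0 := normr_ge0 (a+x-(b+y)). have W2 := nK (a+x-(b+y)).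
split.
  have h : `|a+x-(b+y)| < `|a+x+(b+y)| by lra.
  nra.
have hS : s3 * t / 2 <= `|a+b| by apply: sqle => //; nra.
have hP : `|x+y| <= t/4 by apply: sqle; nra.
nra.
Qed.

Lemma core2 (R : rcfType) (a b x y t s3 r : R) : 0 < t -> t^+2 = 2 -> 0 < s3 -> s3^+2 = 3 -> 0 < r ->
  3/(4*r^+2) <= 2*a*b -> a^+2+b^+2 <= (r^-1)^+2 -> x^+2+y^+2 <= ((4*r)^-1)^+2 ->
  0 < (a+x)*(b+y) /\ (s3/2 - 1/4)/r <= `|t^-1 * (a+x+(b+y))|.
Proof.
move=> t0 t2 s0 s2 r0 hab hn hd.
have r2 : 0 < r^+2 by rewrite exprn_gt0.
have rn : r != 0 by rewrite gt_eqF.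
have tn : t != 0 by rewrite gt_eqF.
have := @core1 R (r*a) (r*b) (r*x) (r*y) t s3 t0 t2 s0 s2.
case.
- have -> : 2*(r*a)*(r*b) = r^+2 * (2*a*b) by ring.
  have -> : (3/4 : R) = r^+2 * (3/(4*r^+2)) by field.
  by rewrite ler_pM2l.
- have -> : (r*a)^+2 + (r*b)^+2 = r^+2 * (a^+2+b^+2) by ring.
  have -> : (1 : R) = r^+2 * (r^-1)^+2 by field.
  by rewrite ler_pM2l.
- have -> : (r*x)^+2 + (r*y)^+2 = r^+2 * (x^+2+y^+2) by ring.
  have -> : (1/16 : R) = r^+2 * ((4*r)^-1)^+2 by field.
  by rewrite ler_pM2l.
move=> h1 h2; split.
  have : 0 < r^+2 * ((a+x)*(b+y)).
    have -> : r^+2 * ((a+x)*(b+y)) = (r*a+r*x)*(r*b+r*y) by ring.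
    exact: h1.
  by rewrite pmulr_rgt0.
have e : r*a+r*x+(r*b+r*y) = r * (a+x+(b+y)) by ring.
rewrite e in h2.
move: h2; rewrite !normrM normfV (gtr0_norm r0) (gtr0_norm t0) => h2.
rewrite ler_pdivrMr // -(ler_pM2l t0).
have -> : t * (t^-1 * `|a + x + (b + y)| * r) = r * `|a + x + (b + y)| by field.
by [].
Qed.
Section Mat.
Variables (R : rcfType) (n : nat).
Local Notation d := n.+2.
Local Notation i1 := (lift ord0 (ord0 : 'I_n.+1)).

Lemma sum2 (f : 'I_d -> R) :
  \sum_i f i = f ord0 + f i1 + \sum_(i < n) f (lift ord0 (lift ord0 i)).
Proof. by rewrite !big_ord_recl addrA. Qed.

Lemma innerE (v w : 'cV[R]_d) : inner v w = \sum_j v j 0 * w j 0.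
Proof. by rewrite /inner !mxE; apply: eq_bigr => j _; rewrite mxE. Qed.

Lemma e1E (w : 'cV[R]_d) : inner w (@e1 R d) = w ord0 0.
Proof.
rewrite innerE sum2 big1 ?addr0; last by move=> i _; rewrite !mxE /= mulr0.
by rewrite !mxE /= mulr1 mulr0 addr0.
Qed.

Lemma e2E (w : 'cV[R]_d) : inner w (@e2 R d) = w i1 0.
Proof.
rewrite innerE sum2 big1 ?addr0; last by move=> i _; rewrite !mxE /= mulr0.
by rewrite !mxE /= mulr1 mulr0 add0r.
Qed.

Lemma innerC (v w : 'cV[R]_d) : inner v w = inner w v.
Proof. by rewrite !innerE; apply: eq_bigr => j _; rewrite mulrC. Qed.

Lemma quad (u v w : 'cV[R]_d) : (w^T *m (u *m v^T) *m w) 0 0 = inner w u * inner v w.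
Proof. by rewrite mulmxA -mulmxA mxE big_ord1. Qed.

Lemma qpopE (w : 'cV[R]_d) : qpop w = 2 * w ord0 0 * w i1 0.
Proof.
rewrite /qpop /Mpop mulmxDr mulmxDl mxE !quad (innerC (e2 _ _)) (innerC (e1 _ _)) e1E e2E.
ring.
Qed.

Lemma inner_p (c : R) (u v w : 'cV[R]_d) : inner (c *: (u + v)) w = c * (inner u w + inner v w).
Proof.
rewrite !innerE -big_split /= mulr_sumr; apply: eq_bigr => j _; rewrite !mxE; ring.
Qed.

Lemma inner_m (c : R) (u v w : 'cV[R]_d) : inner (c *: (u - v)) w = c * (inner u w - inner v w).
Proof.
rewrite !innerE -sumrB mulr_sumr; apply: eq_bigr => j _; rewrite !mxE; ring.
Qed.

Lemma inner_s (c s : R) (u v w : 'cV[R]_d) : inner w (c *: (u + s *: v)) = c * (inner w u + s * inner w v).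
Proof.
rewrite !innerE mulr_sumr -big_split /= mulr_sumr; apply: eq_bigr => j _; rewrite !mxE; ring.
Qed.

Lemma outer (u v w : 'cV[R]_d) i : (u *m v^T *m w) i 0 = u i 0 * inner v w.
Proof. by rewrite -mulmxA mxE big_ord1. Qed.

Lemma P12E (w : 'cV[R]_d) i :
  (@P12 R d *m w) i 0 = (@e1 R d) i 0 * w ord0 0 + (@e2 R d) i 0 * w i1 0.
Proof.
rewrite /P12 mulmxDl mxE !outer /uplus /uminus inner_p inner_m.
rewrite !(innerC _ w) e1E e2E !mxE.
have h : (Num.sqrt (2:R))^-1 ^+ 2 = 1/2 by rewrite exprVn sqr_sqrtr // mul1r.
have -> : forall (c p q u v : R), c * (p + q) * (c * (u + v)) + c * (p - q) * (c * (u - v)) = c^+2 * 2 * (p*u + q*v) by move=> *; ring.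
by rewrite h; field.
Qed.

Lemma normP12 (w : 'cV[R]_d) : norm2 (@P12 R d *m w) = Num.sqrt (w ord0 0 ^+ 2 + w i1 0 ^+ 2).
Proof.
rewrite /norm2 sum2 big1 ?addr0; last by move=> i _; rewrite P12E !mxE /=; ring.
by rewrite !P12E !mxE /=; congr Num.sqrt; ring.
Qed.

Lemma normD (w : 'cV[R]_d) : w ord0 0 ^+ 2 + w i1 0 ^+ 2 <= \sum_i w i 0 ^+ 2.
Proof.
rewrite sum2 lerDl; apply: sumr_ge0 => i _; exact: sqr_ge0.
Qed.

End Mat.

Lemma sqrt_sq {R : rcfType} {S k : R} : 0 <= S -> Num.sqrt S <= k -> S <= k ^+ 2.
Proof.
move=> h0 h; have h1 := sqr_sqrtr h0; have h2 := sqrtr_ge0 S; nra.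
Qed.

Theorem lemma15 (R : rcfType) (d : nat) (hd : (1 <= d)%N)
    (w0 wT : 'cV[R]_d)
    (hw0 : norm2 w0 = 1) (hwT : norm2 wT = 1)
    (hq : 3 / (4 * d%:R) <= `|qpop w0|)
    (hP : norm2 (@P12 R d *m w0) <= (Num.sqrt (d%:R : R))^-1)
    (hdist : norm2 (wT - w0) <= (4 * Num.sqrt (d%:R))^-1) :
  Num.sg (qpop wT) = Num.sg (qpop w0) /\
  (let s := Num.sg (qpop w0) in
   (Num.sqrt (3 : R) / 2 - 1 / 4) / Num.sqrt (d%:R) <= `|inner wT (@u_sgn R d s)| /\
   (2 * Num.sqrt (d%:R))^-1 <= (Num.sqrt (3 : R) / 2 - 1 / 4) / Num.sqrt (d%:R)).
Proof.
case: d hd w0 wT hw0 hwT hq hP hdist => [//|[|n]] _ w0 wT _ _ hq hP hdist.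
  exfalso.
  have e20 : @e2 R 1 = 0 by apply/matrixP => i j; rewrite !mxE ord1.
  have : qpop w0 = 0.
    by rewrite /qpop /Mpop e20 trmx0 mulmx0 mul0mx addr0 mulmx0 mul0mx mxE.
  move=> q0; rewrite q0 normr0 in hq; lra.
set r := Num.sqrt (n.+2%:R : R).
have r0 : 0 < r by rewrite sqrtr_gt0 ltr0n.
have r2 : n.+2%:R = r ^+ 2 by rewrite sqr_sqrtr // ler0n.
set t := Num.sqrt (2 : R).
have t0 : 0 < t by rewrite sqrtr_gt0.
have t2 : t ^+ 2 = 2 by rewrite sqr_sqrtr.
set s3 := Num.sqrt (3 : R).
have s0 : 0 < s3 by rewrite sqrtr_gt0.
have s2 : s3 ^+ 2 = 3 by rewrite sqr_sqrtr.
have third : (2 * r)^-1 <= (s3 / 2 - 1 / 4) / r.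
  have -> : (2 * r)^-1 = (1/2) / r by field; rewrite gt_eqF.
  rewrite ler_pM2r ?invr_gt0 //.
  have : 3/2 <= s3 by apply: sqle; nra.
  lra.
rewrite /= third qpopE qpopE.
set a := w0 ord0 0; set b := w0 (lift ord0 ord0) 0.
set c := wT ord0 0; set e := wT (lift ord0 ord0) 0.
have hn : a^+2 + b^+2 <= (r^-1)^+2.
  apply: sqrt_sq; first by rewrite addr_ge0 ?sqr_ge0.
  by rewrite -normP12.
have hd : (c - a)^+2 + (e - b)^+2 <= ((4*r)^-1)^+2.
  have S0 : 0 <= \sum_i (wT - w0) i 0 ^+ 2 by apply: sumr_ge0 => i _; exact: sqr_ge0.
  rewrite /norm2 in hdist; apply: (le_trans _ (sqrt_sq S0 hdist)).
  have := @normD R n (wT - w0); rewrite !mxE.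
  by [].
rewrite r2 qpopE -/a -/b in hq.
rewrite /u_sgn inner_s e1E e2E -/c -/e.
have hab : a * b != 0.
  apply/eqP => h0; move: hq; rewrite -mulrA h0 mulr0 normr0.
  rewrite ler_pdivrMr ?mul0r ?lerNgt //; last by rewrite mulr_gt0 // exprn_gt0.
  lra.
case: (ltrgt0P (a * b)) => [ab0|ab0|ab0]; last by move: hab; rewrite ab0 eqxx.
- have n2 : `|2*a*b| = 2*a*b by rewrite ger0_norm // -mulrA mulr_ge0 // ltW.
  have hq' : 3/(4*r^+2) <= 2*a*b by rewrite -n2.
  have [h1 h2] := @core2 R a b (c-a) (e-b) t s3 r t0 t2 s0 s2 r0 hq' hn hd.
  have ce : a + (c - a) = c by ring.
  have eb : b + (e - b) = e by ring.
  rewrite ce eb in h1 h2.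
  have -> : Num.sg (2*c*e) = 1 by apply: gtr0_sg; rewrite -mulrA mulr_gt0.
  have -> : Num.sg (2*a*b) = 1 by apply: gtr0_sg; rewrite -mulrA mulr_gt0.
  by rewrite [1 * e]mul1r; split => //; split => //; exact: h2.
- have n2 : `|2*a*b| = 2*a*(-b).
    rewrite ltr0_norm; first by ring.
    by rewrite -mulrA pmulr_rlt0.
  have hq' : 3/(4*r^+2) <= 2*a*(-b) by rewrite -n2.
  have hn' : a^+2 + (-b)^+2 <= (r^-1)^+2 by rewrite sqrrN.
  have hd' : (c - a)^+2 + (-e - (-b))^+2 <= ((4*r)^-1)^+2 by rewrite -opprD sqrrN.
  have [h1 h2] := @core2 R a (-b) (c-a) (-e - - b) t s3 r t0 t2 s0 s2 r0 hq' hn' hd'.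
  have ce : a + (c - a) = c by ring.
  have eb : - b + (- e - - b) = - e by ring.
  rewrite ce eb in h1 h2.
  have ce0 : c * e < 0 by rewrite -oppr_gt0 -mulrN.
  have -> : Num.sg (2*c*e) = -1 by apply: ltr0_sg; rewrite -mulrA pmulr_rlt0.
  have -> : Num.sg (2*a*b) = -1 by apply: ltr0_sg; rewrite -mulrA pmulr_rlt0.
  by rewrite [-1 * e]mulN1r; split => //; split => //; exact: h2.
Qed.
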